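(* Let $h\in(0,2h_c(T))$, $h\neq h_c(T)$, and let $k,N$ be integers with $2^k<N$. There exists a positive constant $C_{17}$ (independent of $k$, $N$, $t$ and of the event) such that for every increasing event $A\in\mathcal F_{S(2^k)}$ and every $t\in[0,1]$, \[ C_{17}\frac{|h-h_c(T)|}{\mathfrak KT}\sum_{v\in\mathrm{Supp}(A)}\mu^N_t\big(A\cap\Delta_vA\big)\le\frac{d}{dt}\mu^N_t(A). \]
   Context: Ising model on $\mathbf{Z}^2$ with spins $\omega\in\{\pm1\}^{\mathbf Z^2}$, nearest-neighbour ferromagnetic interaction, external field $h$, temperature $T$, Boltzmann constant $\mathfrak K$; $T>T_c$ fixed; $h_c(T)$ is the threshold $\inf\{h:\mu_{T,h}(\#\mathbf C_0^+=\infty)>0\}$ for percolation of the $(+)$-cluster (cluster of $+1$ spins under nearest-neighbour adjacency) of the origin under the Gibbs measure $\mu_{T,h}$. $S(n)=[-n,n]^2$; $\mathcal F_V$ is the $\sigma$-algebra generated by the spins in $V$. Periodic measures: $\mu^N_{T,h}$ is the Gibbs measure on the torus obtained from $S(N)$ by identifying opposite sides; $h(t)=h_c(T)+t(h-h_c(T))$ if $h>h_c(T)$, $h(t)=h+t(h_c(T)-h)$ if $h<h_c(T)$; $\mu^N_t=\mu^N_{T,h(t)}$. An event is increasing if it is preserved by changing spins from $-1$ to $+1$. For $v$ and $\omega$, $\omega^v$ is $\omega$ with the spin at $v$ flipped; $\Delta_vA=\{\omega:\mathbf 1_A(\omega)+\mathbf 1_A(\omega^v)=1\}$ (configurations where $v$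 is pivotal for $A$), and $\mathrm{Supp}(A)=\{v\in\mathbf Z^2:\Delta_vA\ne\emptyset\}$. *)

(* Defs.v *)
From HB Require Import structures.
From mathcomp Require Import all_boot all_order all_algebra finmap.
From mathcomp Require Import all_classical all_reals all_analysis.
Set Implicit Arguments. Unset Strict Implicit. Unset Printing Implicit Defensive.
Import Order.TTheory GRing.Theory Num.Theory.
Local Open Scope classical_set_scope.
Local Open Scope ring_scope.

Definition site := (int * int)%type.
Definition config := site -> bool.

Definition spin {R : realType} (w : config) (x : site) : R :=
  if w x then 1 else -1.

Definition adj (x y : site) : bool :=
  (`|x.1 - y.1|%N + `|x.2 - y.2|%N == 1)%N.

Definition nbrs (x : site) : seq site :=
  [:: (x.1 + 1, x.2); (x.1 - 1, x.2); (x.1, x.2 + 1); (x.1, x.2 - 1)].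

Definition inbox (n : nat) (x : site) : bool :=
  (`|x.1|%N <= n)%N && (`|x.2|%N <= n)%N.

Definition zrange (n : nat) : seq int :=
  [seq (i%:Z - n%:Z) | i <- iota 0 (n.*2.+1)].
Definition boxseq (n : nat) : seq site :=
  [seq (a, b) | a <- zrange n, b <- zrange n].

(* A is in F_V: it depends only on the spins in V
   (for finite V this is exactly membership in the sigma-algebra
    generated by the spins in V) *)
Definition local_in (V : site -> bool) (A : set config) : Prop :=
  forall w w' : config, (forall x, V x -> w x = w' x) -> (A w <-> A w').

Definition increasing (A : set config) : Prop :=
  forall w w' : config, (forall x, w x ==> w' x) -> A w -> A w'.

Definition flip (v : site) (w : config) : config :=
  fun x => if x == v then ~~ w v else w x.

Definition Delta (v : site) (A : set config) : set config :=
  [set w | (A w /\ ~ A (flip v w)) \/ (~ A w /\ A (flip v w))].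

Definition Supp (A : set config) : set site :=
  [set v | Delta v A !=set0].

Definition cylinders : set (set config) :=
  [set [set w : config | w x] | x in [set: site]].
Definition Omega := g_sigma_algebraType cylinders.

Definition glue (L : {fset site}) (xi : (size L).-tuple bool) (eta : config)
  : config :=
  fun x => if x \in L then nth false xi (index x L) else eta x.

(* Hamiltonian (with a minus sign) of the interactions touching L:
   sum_{x in L} h w_x + sum_{edges {x,y} meeting L} w_x w_y  *)
Definition localH {R : realType} (h : R) (L : {fset site}) (w : config) : R :=
  \sum_(x <- L) (h * spin w x +
     \sum_(y <- nbrs x) (if y \in L then 2^-1 else 1) * spin w x * spin w y).

Definition gammaL {R : realType} (beta h : R) (L : {fset site})
  (B : set config) (eta : config) : R :=
  (\sum_(xi : (size L).-tuple bool)
      (if `[< B (glue xi eta) >] then expR (beta * localH h L (glue xi eta))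
       else 0)) /
  (\sum_(xi : (size L).-tuple bool) expR (beta * localH h L (glue xi eta))).

Definition Gibbs {R : realType} (beta h : R) (P : probability Omega R) : Prop :=
  forall (L : {fset site}) (B : set Omega), measurable B ->
    P B = (\int[P]_eta (gammaL beta h L B eta)%:E)%E.

Definition beta_of {R : realType} (K T : R) : R := (K * T)^-1.

Definition Tc {R : realType} (K : R) : R :=
  sup [set T : R | 0 < T /\
        exists P1 P2 : probability Omega R,
          [/\ Gibbs (beta_of K T) 0 P1, Gibbs (beta_of K T) 0 P2 &
              exists B : set Omega, measurable B /\ P1 B <> P2 B]].

Definition pconn (w : config) (x y : site) : Prop :=
  exists p : seq site,
    [/\ w x, path (fun a b => adj a b && w b) x p & last x p = y].
Definition plus_cluster (w : config) : set site := [set y | pconn w (0, 0) y].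
Definition percolates : set Omega := [set w | ~ finite_set (plus_cluster w)].

Definition hc {R : realType} (K T : R) : R :=
  inf [set h : R | exists P : probability Omega R,
         Gibbs (beta_of K T) h P /\ (0 < P percolates)%E].

(* S(N) with opposite sides identified: the discrete torus of side 2N.
   (For N > 0, (N.*2).-1.+1 = 2N.) *)
Definition tside (N : nat) := 'I_(N.*2).-1.+1.
Definition tsite (N : nat) := (tside N * tside N)%type.
Definition tconfig (N : nat) := {ffun tsite N -> bool}.

Definition tsucc (N : nat) (i : tside N) : tside N :=
  inord (i.+1 %% (N.*2))%N.
Definition tright N (x : tsite N) : tsite N := (tsucc x.1, x.2).
Definition tup N (x : tsite N) : tsite N := (x.1, tsucc x.2).

Definition tspin {R : realType} N (s : tconfig N) (x : tsite N) : R :=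
  if s x then 1 else -1.

(* minus the torus Hamiltonian: sum over edges of s_x s_y + h sum_x s_x *)
Definition torusH {R : realType} N (h : R) (s : tconfig N) : R :=
  \sum_(x : tsite N)
     (tspin s x * (tspin s (tright x) + tspin s (tup x)) + h * tspin s x).

Definition tproj (N : nat) (x : site) : tsite N :=
  (inord `|(x.1 %% (N.*2)%:Z)%Z|%N, inord `|(x.2 %% (N.*2)%:Z)%Z|%N).
Definition text N (s : tconfig N) : config := fun x => s (tproj N x).

Definition muN {R : realType} (K T h : R) (N : nat) (A : set config) : R :=
  (\sum_(s : tconfig N)
     (if `[< A (text s) >] then expR (beta_of K T * torusH h s) else 0)) /
  (\sum_(s : tconfig N) expR (beta_of K T * torusH h s)).

Definition hpath {R : realType} (K T h t : R) : R :=
  if hc K T < h then hc K T + t * (h - hc K T) else h + t * (hc K T - h).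

Definition mut {R : realType} (K T h : R) (N : nat) (t : R) (A : set config) : R :=
  muN K T (hpath K T h t) N A.

(* Main.v *)
Require Import Defs.
From HB Require Import structures.
From mathcomp Require Import all_boot all_order all_algebra finmap.
From mathcomp Require Import all_classical all_reals all_analysis.
From mathcomp Require Import ring lra zify.
Import Order.TTheory GRing.Theory Num.Theory.
Local Open Scope classical_set_scope.
Local Open Scope ring_scope.



Section FKG.
Variable R : realFieldType.
Variable I : finType.
Local Notation cfg := {ffun I -> bool}.

Definition cjoin (a b : cfg) : cfg := [ffun i => a i || b i].
Definition cmeet (a b : cfg) : cfg := [ffun i => a i && b i].
Definition cupd (a : cfg) (x : I) (b : bool) : cfg := [ffun i => if i == x then b else a i].
Definition agree (S : {set I}) (e a : cfg) : bool :=
  [forall i, (i \notin S) ==> (a i == e i)].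
Definition Psum (S : {set I}) (F : cfg -> R) (e : cfg) : R :=
  \sum_(a | agree S e a) F a.

Lemma oneD (a0 a1 b0 b1 c0 c1 d0 d1 : R) :
  0 <= a0 -> 0 <= a1 -> 0 <= b0 -> 0 <= b1 ->
  0 <= c0 -> 0 <= c1 -> 0 <= d0 -> 0 <= d1 ->
  a0 * b0 <= c0 * d0 -> a0 * b1 <= c1 * d0 -> a1 * b0 <= c1 * d0 ->
  a1 * b1 <= c1 * d1 ->
  (a0 + a1) * (b0 + b1) <= (c0 + c1) * (d0 + d1).
Proof.
move=> ha0 ha1 hb0 hb1 hc0 hc1 hd0 hd1 h00 h01 h10 h11.
set x := c1 * d0.
have hx : 0 <= x by apply: mulr_ge0.
have key : a0 * b1 + a1 * b0 <= c0 * d1 + x.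
  have [x0|xp] := eqVneq x 0.
    have e1 : a0 * b1 = 0 by apply/eqP; rewrite eq_le mulr_ge0 // andbT -x0.
    have e2 : a1 * b0 = 0 by apply/eqP; rewrite eq_le mulr_ge0 // andbT -x0.
    by rewrite e1 e2 x0 addr0 addr0 mulr_ge0.
  have xp' : 0 < x by rewrite lt_def xp hx.
  have P1 : (a0 * b1) * (a1 * b0) <= (c0 * d1) * x.
    have -> : (a0 * b1) * (a1 * b0) = (a0 * b0) * (a1 * b1) by ring.
    have -> : (c0 * d1) * x = (c0 * d0) * (c1 * d1) by rewrite /x; ring.
    by apply: ler_pM => //; apply: mulr_ge0.
  have P2 : 0 <= (x - a0 * b1) * (x - a1 * b0) by apply: mulr_ge0; rewrite subr_ge0.
  rewrite -(ler_pM2l xp').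
  nra.
have -> : (a0 + a1) * (b0 + b1) = a0 * b0 + (a0 * b1 + a1 * b0) + a1 * b1 by ring.
have -> : (c0 + c1) * (d0 + d1) = c0 * d0 + (c0 * d1 + x) + c1 * d1 by rewrite /x; ring.
by apply: lerD => //; apply: lerD.
Qed.


Lemma agree0 (e a : cfg) : agree finset.set0 e a = (a == e).
Proof.
apply/forallP/eqP => [H|->]; last by move=> i; rewrite eqxx implybT.
by apply/ffunP => i; move: (H i); rewrite finset.in_set0 /= => /eqP.
Qed.

Lemma agreeT (e a : cfg) : agree finset.setT e a.
Proof. by apply/forallP => i; rewrite finset.in_setT. Qed.

Lemma agreeU (S : {set I}) (x : I) (e a : cfg) (b : bool) : x \notin S ->
  agree (x |: S) e a && (a x == b) = agree S (cupd e x b) a.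
Proof.
move=> xS; apply/andP/forallP => [[/forallP H /eqP ax] i|H].
  apply/implyP => iS; rewrite ffunE; case: (i =P x) => [->|ix]; first by rewrite ax.
  by have := H i; rewrite in_setU1 (negbTE iS) orbF; case: (i =P x).
split.
  apply/forallP => i; apply/implyP; rewrite in_setU1 negb_or => /andP[ix iS].
  by have := H i; rewrite iS ffunE (negbTE ix).
by have := H x; rewrite xS ffunE eqxx.
Qed.

Lemma PsumU (S : {set I}) (x : I) (F : cfg -> R) (e : cfg) : x \notin S ->
  Psum (x |: S) F e = Psum S F (cupd e x false) + Psum S F (cupd e x true).
Proof.
move=> xS; rewrite /Psum (bigID (fun a : cfg => a x)) /= addrC; congr (_ + _).
  by apply: eq_bigl => a; rewrite -agreeU //; case: (a x).
by apply: eq_bigl => a; rewrite -agreeU //; case: (a x).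
Qed.

Lemma join_upd (e1 e2 : cfg) (x : I) (b1 b2 : bool) :
  cjoin (cupd e1 x b1) (cupd e2 x b2) = cupd (cjoin e1 e2) x (b1 || b2).
Proof. by apply/ffunP => i; rewrite !ffunE; case: eqP. Qed.
Lemma meet_upd (e1 e2 : cfg) (x : I) (b1 b2 : bool) :
  cmeet (cupd e1 x b1) (cupd e2 x b2) = cupd (cmeet e1 e2) x (b1 && b2).
Proof. by apply/ffunP => i; rewrite !ffunE; case: eqP. Qed.

Lemma Psum_ge0 (S : {set I}) (F : cfg -> R) (e : cfg) : (forall a, 0 <= F a) -> 0 <= Psum S F e.
Proof. by move=> H; apply: sumr_ge0 => a _. Qed.

Lemma PsumT (F : cfg -> R) (e : cfg) : Psum finset.setT F e = \sum_a F a.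
Proof. by apply: eq_bigl => a; rewrite agreeT. Qed.

Lemma Psum0 (F : cfg -> R) (e : cfg) : Psum finset.set0 F e = F e.
Proof.
rewrite /Psum (eq_bigl (fun a => a == e)); first by rewrite big_pred1_eq.
by move=> a; rewrite agree0.
Qed.

Lemma four_fun (al be ga de : cfg -> R) :
  (forall a, 0 <= al a) -> (forall a, 0 <= be a) ->
  (forall a, 0 <= ga a) -> (forall a, 0 <= de a) ->
  (forall a b, al a * be b <= ga (cjoin a b) * de (cmeet a b)) ->
  (\sum_a al a) * (\sum_a be a) <= (\sum_a ga a) * (\sum_a de a).
Proof.
move=> hal hbe hga hde H.
suff: forall (l : seq I) e1 e2, Psum [set i in l] al e1 * Psum [set i in l] be e2 <=
   Psum [set i in l] ga (cjoin e1 e2) * Psum [set i in l] de (cmeet e1 e2).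
  move/(_ (enum I) [ffun=> false] [ffun=> false]).
  have E : [set i in enum I] = finset.setT by apply/setP => i; rewrite !inE mem_enum.
  by rewrite E !PsumT.
elim => [|x l IH] e1 e2.
  have E : [set i in [::]] = finset.set0 :> {set I} by apply/setP => i; rewrite !inE.
  rewrite E !Psum0; exact: H.
have E : [set i in x :: l] = x |: [set i in l] by apply/setP => i; rewrite !inE.
rewrite E; case: (boolP (x \in [set i in l])) => xl.
  have E2 : x |: [set i in l] = [set i in l].
    by apply/setP => i; rewrite in_setU1; case: eqP => // ->.
  by rewrite E2; apply: IH.
rewrite !PsumU //.
apply: oneD; try exact: Psum_ge0.
- by have := IH (cupd e1 x false) (cupd e2 x false); rewrite join_upd meet_upd.
- by have := IH (cupd e1 x false) (cupd e2 x true); rewrite join_upd meet_upd.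
- by have := IH (cupd e1 x true) (cupd e2 x false); rewrite join_upd meet_upd.
- by have := IH (cupd e1 x true) (cupd e2 x true); rewrite join_upd meet_upd.
Qed.


Definition le_cfg (a b : cfg) := forall i, a i ==> b i.
Definition incr (F : cfg -> R) := forall a b, le_cfg a b -> F a <= F b.

Section Weighted.
Variable w : cfg -> R.
Hypothesis w_gt0 : forall a, 0 < w a.
Hypothesis w_latt : forall a b, w a * w b <= w (cjoin a b) * w (cmeet a b).

Definition Sw (F : cfg -> R) := \sum_a w a * F a.

Lemma SwD F G : Sw (fun a => F a + G a) = Sw F + Sw G.
Proof. by rewrite /Sw -big_split; apply: eq_bigr => a _; rewrite mulrDr. Qed.
Lemma SwZ c F : Sw (fun a => c * F a) = c * Sw F.
Proof. by rewrite /Sw mulr_sumr; apply: eq_bigr => a _; rewrite mulrCA. Qed.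
Lemma Sw_ext F G : (forall a, F a = G a) -> Sw F = Sw G.
Proof. by move=> H; apply: eq_bigr => a _; rewrite H. Qed.
Lemma Sw_ge0 F : (forall a, 0 <= F a) -> 0 <= Sw F.
Proof. by move=> H; apply: sumr_ge0 => a _; apply: mulr_ge0 => //; apply: ltW. Qed.

Lemma fkg F G : incr F -> incr G -> (forall a, 0 <= F a) -> (forall a, 0 <= G a) ->
  Sw F * Sw G <= Sw (fun a => F a * G a) * Sw (fun _ => 1).
Proof.
move=> iF iG F0 G0.
apply: (four_fun (fun a => w a * F a) (fun a => w a * G a)
  (fun a => w a * (F a * G a)) (fun a => w a * 1)).
- by move=> a; apply: mulr_ge0 => //; apply: ltW.
- by move=> a; apply: mulr_ge0 => //; apply: ltW.
- by move=> a; apply: mulr_ge0; [apply: ltW|apply: mulr_ge0].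
- by move=> a; rewrite mulr1; apply: ltW.
move=> a b; rewrite mulr1.
have la : le_cfg a (cjoin a b) by move=> i; rewrite ffunE; apply/implyP => ->.
have lb : le_cfg b (cjoin a b) by move=> i; rewrite ffunE orbC; apply/implyP => ->.
have -> : w a * F a * (w b * G b) = (w a * w b) * (F a * G b) by ring.
have -> : w (cjoin a b) * (F (cjoin a b) * G (cjoin a b)) * w (cmeet a b) =
  (w (cjoin a b) * w (cmeet a b)) * (F (cjoin a b) * G (cjoin a b)) by ring.
apply: ler_pM => //; first by apply: mulr_ge0; apply: ltW.
  by apply: mulr_ge0.
by apply: ler_pM => //; [apply: iF|apply: iG].
Qed.

Definition tsp (s : cfg) (x : I) : R := if s x then 1 else -1.

Lemma pivot (A : cfg -> bool) (x : I) (q : R) :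
  (forall s s', le_cfg s s' -> A s -> A s') ->
  0 < q -> q <= 1 ->
  (forall s : cfg, s x -> q * w s <= w (cupd s x false)) ->
  q * Sw (fun s => (A s && ~~ A (cupd s x false))%:R) * Sw (fun _ => 1)
  <= Sw (fun s => (A s)%:R * tsp s x) * Sw (fun _ => 1)
     - Sw (fun s => (A s)%:R) * Sw (fun s => tsp s x).
Proof.
move=> Ainc q0 q1 fe.
pose g (s : cfg) : R := (s x)%:R.
pose am (s : cfg) : R := (A (cupd s x false))%:R.
pose P (s : cfg) : R := (A (cupd s x true) && ~~ A (cupd s x false))%:R.
have updK (s : cfg) : cupd s x (s x) = s.
  by apply/ffunP => i; rewrite ffunE; case: (i =P x) => [->|].
have le_upd (s : cfg) : le_cfg (cupd s x false) (cupd s x true).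
  by move=> i; rewrite !ffunE; case: (i == x) => //; apply/implyP.
have dec (s : cfg) : (A s)%:R = am s + P s * g s :> R.
  rewrite /am /P /g; case sx: (s x).
    have := updK s; rewrite sx => E; rewrite E.
    have := Ainc _ _ (le_upd s); rewrite E.
    case: (A s); case: (A (cupd s x false)) => /= H; try (simpl; ring).
    by have := H isT.
  have := updK s; rewrite sx => E; rewrite E.
  case: (A s); case: (A (cupd s x true)) => /=; ring.
have eE (s : cfg) : (A s && ~~ A (cupd s x false))%:R = P s * g s :> R.
  rewrite /P /g; case sx: (s x).
    have := updK s; rewrite sx => E; rewrite E.
    case: (A s); case: (A (cupd s x false)) => /=; ring.
  have := updK s; rewrite sx => E; rewrite E.
  case: (A s); case: (A (cupd s x true)) => /=; ring.
have etsp (s : cfg) : tsp s x = 2 * g s + (-1) * 1.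
  by rewrite /tsp /g; case: (s x) => /=; ring.
have gg (s : cfg) : g s * g s = g s by rewrite /g; case: (s x); rewrite ?mulr1 ?mulr0.
set Z := Sw (fun _ => 1).
set G := Sw g.
set M := Sw (fun s => am s * g s).
set Am := Sw am.
set SE := Sw (fun s => P s * g s).
have e_tsp : Sw (fun s => tsp s x) = 2 * G - Z.
  by rewrite (Sw_ext _ _ etsp) SwD !SwZ; rewrite /G /Z; ring.
have e_E : Sw (fun s => (A s && ~~ A (cupd s x false))%:R) = SE by apply: Sw_ext.
have e_Y : Sw (fun s => (A s)%:R) = Am + SE by rewrite (Sw_ext _ _ dec) SwD.
have e_X : Sw (fun s => (A s)%:R * tsp s x) = 2 * (M + SE) - (Am + SE).
  have H1 (s : cfg) : (A s)%:R * tsp s x =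
      2 * (am s * g s + P s * g s) + (-1) * (am s + P s * g s).
    by rewrite dec etsp /g; case: (s x) => /=; ring.
  by rewrite (Sw_ext _ _ H1) SwD !SwZ !SwD /M /SE /Am; ring.
have fk : Am * G <= M * Z.
  apply: fkg.
  - move=> a b ab; rewrite /am; case: (boolP (A (cupd a x false))) => h //=.
    rewrite (Ainc (cupd a x false) (cupd b x false)) //.
    by move=> i; rewrite !ffunE; case: (i == x) => //; apply: ab.
  - move=> a b ab; rewrite /g; have := ab x; case: (a x); case: (b x) => //= _.
  - by move=> a; rewrite /am; case: (A _).
  - by move=> a; rewrite /g; case: (a x).
have eZ : Z = G + Sw (fun s => 1 - g s).
  by rewrite -SwD; apply: Sw_ext => s; ring.
pose fl (s : cfg) := cupd s x (~~ s x).
have flK : involutive fl.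
  move=> s; apply/ffunP => i; rewrite /fl !ffunE eqxx; case: (i =P x) => [->|//].
  by rewrite negbK.
have fe2 : q * G <= Sw (fun s => 1 - g s).
  rewrite /Sw (reindex_inj (inv_inj flK)) /G /Sw mulr_sumr; apply: ler_sum => s _.
  rewrite /g /fl ffunE eqxx; case sx: (s x) => /=.
    by rewrite mulr1 subr0 mulr1; apply: fe.
  by rewrite !mulr0 subrr mulr0.
have SE0 : 0 <= SE by apply: Sw_ge0 => s; rewrite mulr_ge0 ?ler0n.
have G0 : 0 <= G by apply: Sw_ge0 => s; rewrite ler0n.
rewrite e_E e_X e_Y e_tsp.
have key : 0 <= SE * (2 * (Z - G) - q * Z).
  apply: mulr_ge0 => //.
  move: eZ fe2; set U := Sw _ => eZ fe2.
  have qG : 0 <= q * G by apply: mulr_ge0 => //; apply: ltW.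
  have U0 : 0 <= U by apply: le_trans fe2.
  have h1 : 0 <= (1 - q) * U by apply: mulr_ge0; rewrite ?subr_ge0.
  rewrite eZ; lra.
have k2 : 0 <= 2 * (M * Z - Am * G) by rewrite mulr_ge0 // subr_ge0.
have -> : (2 * (M + SE) - (Am + SE)) * Z - (Am + SE) * (2 * G - Z) =
   2 * (M * Z - Am * G) + SE * (2 * (Z - G)) by ring.
have -> : q * SE * Z = SE * (q * Z) by ring.
lra.
Qed.

End Weighted.
End FKG.
Arguments cjoin {I}.
Arguments cmeet {I}.
Arguments cupd {I}.
Arguments le_cfg {I}.
Lemma modS_small (a n : nat) : (a < n)%N -> (a.+1 %% n = if a.+1 == n then 0 else a.+1)%N.
Proof.
move=> an; case: eqP => [->|ne]; first by rewrite modnn.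
by rewrite modn_small // ltn_neqAle; apply/andP; split; [apply/eqP|].
Qed.

Lemma tsucc_inj (N : nat) : (0 < N)%N -> injective (@tsucc N).
Proof.
move=> N0 i j /(congr1 val) /=.
have hN : ((N.*2).-1.+1 = N.*2)%N by rewrite prednK // double_gt0.
rewrite !inordK; try by rewrite hN ltn_pmod // double_gt0.
move=> e; apply: val_inj => /=.
have hi : (i < N.*2)%N := leq_trans (ltn_ord i) (eq_leq hN).
have hj : (j < N.*2)%N := leq_trans (ltn_ord j) (eq_leq hN).
rewrite !modS_small // in e.
move: e hi hj; set a := nat_of_ord i; set b := nat_of_ord j. clearbody a b.
case: eqP => ea; case: eqP => eb; try lia.
all: by apply: (leq_trans _ (eq_leq (esym hN))); rewrite ltn_pmod // double_gt0.
Qed.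

Section Tor.
Variable R : realType.
Variable N : nat.
Hypothesis N0 : (0 < N)%N.
Local Notation cfg := (tconfig N).

Lemma tright_inj : injective (@tright N).
Proof. by move=> [a b] [c d] [/(tsucc_inj _ N0) -> ->]. Qed.
Lemma tup_inj : injective (@tup N).
Proof. by move=> [a b] [c d] [-> /(tsucc_inj _ N0) ->]. Qed.

Lemma torusH_lin (h : R) (s : cfg) :
  torusH h s = torusH 0 s + h * \sum_x tspin s x.
Proof. by rewrite /torusH mulr_sumr -big_split; apply: eq_bigr => x _ /=; ring. Qed.

Definition sp (b : bool) : R := if b then 1 else -1.

Lemma tm_latt (h : R) (a0 a1 a2 b0 b1 b2 : bool) :
  sp a0 * (sp a1 + sp a2) + h * sp a0 + (sp b0 * (sp b1 + sp b2) + h * sp b0)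
  <= sp (a0 || b0) * (sp (a1 || b1) + sp (a2 || b2)) + h * sp (a0 || b0)
   + (sp (a0 && b0) * (sp (a1 && b1) + sp (a2 && b2)) + h * sp (a0 && b0)).
Proof.
by case: a0; case: a1; case: a2; case: b0; case: b1; case: b2; rewrite /sp /=; lra.
Qed.

Lemma tm_diff (h : R) (a0 a1 a2 b0 b1 b2 : bool) :
  sp a0 * (sp a1 + sp a2) + h * sp a0 - (sp b0 * (sp b1 + sp b2) + h * sp b0)
  <= 4 + 2 * `|h|.
Proof.
have h1 := ler_norm h; have h2 : - h <= `|h| by rewrite -normrN ler_norm.
by case: a0; case: a1; case: a2; case: b0; case: b1; case: b2; rewrite /sp /=; lra.
Qed.

Lemma torusH_latt (h : R) (a b : cfg) :
  torusH h a + torusH h b <= torusH h (cjoin a b) + torusH h (cmeet a b).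
Proof.
rewrite /torusH -!big_split; apply: ler_sum => x _.
rewrite /tspin !ffunE; exact: (tm_latt h (a x) (a (tright x)) (a (tup x))).
Qed.

Lemma sum_eq1 (F : tsite N -> tsite N) (x : tsite N) :
  injective F -> \sum_y ((F y == x)%:R : R) = 1.
Proof.
move=> injF.
rewrite -(@reindex_inj _ _ _ _ F xpredT (fun y => ((y == x)%:R : R)) injF).
by rewrite (bigD1 x) //= eqxx big1 ?addr0 // => y /negbTE ->.
Qed.

Lemma torusH_fe (h : R) (s s' : cfg) (x : tsite N) :
  (forall y, y != x -> s y = s' y) ->
  torusH h s - torusH h s' <= 3 * (4 + 2 * `|h|).
Proof.
move=> ss'.
have c0 : 0 <= 4 + 2 * `|h| by rewrite addr_ge0 // mulr_ge0.
rewrite /torusH -sumrB.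
apply: (@le_trans _ _ (\sum_y (4 + 2 * `|h|) *
   ((y == x)%:R + (tright y == x)%:R + (tup y == x)%:R))).
  apply: ler_sum => y _.
  case: (boolP ((y == x) || (tright y == x) || (tup y == x))) => hit.
    apply: le_trans; first exact: (tm_diff h (s y) (s (tright y)) (s (tup y))
      (s' y) (s' (tright y)) (s' (tup y))).
    rewrite ler_peMr //.
    by move: hit; case: (y == x); case: (tright y == x); case: (tup y == x) => //=;
      rewrite /= ?add0r ?addr0 -?natrD ?ler1n.
  move: hit; rewrite !negb_or => /andP[/andP[h1 h2] h3].
  rewrite (negbTE h1) (negbTE h2) (negbTE h3) /= !addr0 mulr0.
  by rewrite /tspin !ss' // subrr.
rewrite -mulr_sumr !big_split /=.
rewrite (sum_eq1 _ x tright_inj) (sum_eq1 _ x tup_inj).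
have -> : \sum_i ((i == x)%:R : R) = 1 by exact: (@sum_eq1 id x (@inj_id _)).
lra.
Qed.

End Tor.


Lemma modz_box (N : nat) (z : int) : (`|z| < N)%N ->
  (z %% (N.*2)%:Z)%Z = if 0 <= z then z else z + (N.*2)%:Z.
Proof.
move=> zN; case: ifP => z0.
  apply: modz_small; apply/andP; split => //; lia.
rewrite -modzDr modz_small //; apply/andP; split; lia.
Qed.

Lemma proj_coord (N : nat) (z : int) : (`|z| < N)%N ->
  ((nat_of_ord (inord `|(z %% (N.*2)%:Z)%Z|%N : tside N))%:Z =
     if 0 <= z then z else z + (N.*2)%:Z).
Proof.
move=> zN; have e := modz_box _ _ zN.
have m0 : 0 <= (z %% (N.*2)%:Z)%Z by rewrite e; case: ifP => z0; lia.
rewrite inordK.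
  by rewrite gez0_abs.
rewrite prednK; last by lia.
have : `|(z %% (N.*2)%:Z)%Z|%:Z < (N.*2)%:Z by rewrite gez0_abs // e; case: ifP => z0; lia.
lia.
Qed.

Lemma tproj_inj (N M : nat) (u v : site) : (M < N)%N -> inbox M u -> inbox M v ->
  tproj N u = tproj N v -> u = v.
Proof.
move=> MN /andP[u1 u2] /andP[v1 v2] [e1 e2].
have c1 := proj_coord _ _ (leq_ltn_trans u1 MN); have c2 := proj_coord _ _ (leq_ltn_trans u2 MN).
have d1 := proj_coord _ _ (leq_ltn_trans v1 MN); have d2 := proj_coord _ _ (leq_ltn_trans v2 MN).
rewrite e1 in c1; rewrite e2 in c2.
clear e1 e2; move: u v u1 u2 v1 v2 c1 c2 d1 d2 => [a b] [c d] /= u1 u2 v1 v2 c1 c2 d1 d2.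
rewrite c1 in d1; rewrite c2 in d2.
congr (_, _).
  by move: d1; case: ifP; case: ifP => *; lia.
by move: d2; case: ifP; case: ifP => *; lia.
Qed.

Definition Aev (N : nat) (A : set config) (s : tconfig N) : bool := `[< A (text s) >].
Arguments Aev {N}.

Section Ev.
Variables (N M : nat) (A : set config).
Hypothesis MN : (M < N)%N.
Hypothesis Ainc : increasing A.
Hypothesis Aloc : local_in (inbox M) A.


Lemma Aev_mono (s s' : tconfig N) : (forall i, s i ==> s' i) -> Aev A s -> Aev A s'.
Proof.
move=> ss' /asboolP h; apply/asboolP; apply: Ainc h => y.
exact: ss'.
Qed.

Lemma text_upd (s : tconfig N) (v y : site) (b : bool) : inbox M v -> inbox M y ->
  text (cupd s (tproj N v) b) y = if y == v then b else text s y.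
Proof.
move=> hv hy; rewrite /text ffunE.
case: (y =P v) => [->|nyv]; first by rewrite eqxx.
case: (tproj N y =P tproj N v) => // e; exfalso; apply: nyv; exact: (tproj_inj _ _ _ _ MN hy hv e).
Qed.

Lemma flip_text (s : tconfig N) (v : site) : inbox M v ->
  A (flip v (text s)) <-> A (text (cupd s (tproj N v) (~~ s (tproj N v)))).
Proof.
move=> hv; apply: Aloc => y hy.
by rewrite text_upd // /flip /text.
Qed.

Lemma AD_ev (s : tconfig N) (v : site) : inbox M v ->
  `[< (A `&` Delta v A) (text s) >] =
  Aev A s && ~~ Aev A (cupd s (tproj N v) false).
Proof.
move=> hv.
have updK : cupd s (tproj N v) (s (tproj N v)) = s.
  by apply/ffunP => i; rewrite ffunE; case: (i =P tproj N v) => [->|].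
have fl := flip_text s v hv.
case sx : (s (tproj N v)).
  rewrite sx /= in fl.
  apply/asboolP/andP => [[Aw [[_ nf]|[nAw _]]]|[/asboolP Aw /asboolP nf]].
  - by split; [exact/asboolP|apply/asboolP; move/fl].
  - by [].
  by split => //; left; split => //; move/fl.
rewrite -{2}updK sx andbN.
apply/asboolP => [[Aw [[_ nf]|[nAw _]]]] //; apply: nf.
apply: Ainc Aw => y; rewrite /flip; case: (y =P v) => [->|_]; last by apply/implyP.
by rewrite /text sx.
Qed.

End Ev.


Section Der.
Variable R : realType.

Lemma is_derive_aff (t c l : R) : is_derive t 1 (fun u : R => c + u * l) l.
Proof.
have -> : (fun u : R => c + u * l) = cst c + l \*: (@id R).
  by apply/funext => u /=; rewrite mulrC.
have h := is_deriveD (is_derive_cst c t 1) (is_deriveZ l (is_derive_id t (1 : R))).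
apply: (is_derive_eq h).
by rewrite add0r /GRing.scale /= mulr1.
Qed.

Lemma is_derive_expaff (t c l : R) :
  is_derive t 1 (fun u : R => expR (c + u * l)) (expR (c + t * l) * l).
Proof.
exact: (@is_derive1_comp R expR (fun u => c + u * l) t _ _ (is_derive_expR (c + t * l)) (is_derive_aff t c l)).
Qed.

Lemma is_derive_fsum (I : finType) (F : I -> R -> R) (dF : I -> R) (t : R) :
  (forall i, is_derive t 1 (F i) (dF i)) ->
  is_derive t 1 (fun u => \sum_i F i u) (\sum_i dF i).
Proof.
move=> H.
suff : forall r : seq I, is_derive t 1 (fun u => \sum_(i <- r) F i u) (\sum_(i <- r) dF i).
  by apply.
elim => [|i r IH].
  have -> : (fun u => \sum_(i <- [::]) F i u) = cst 0 by apply/funext => u; rewrite big_nil.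
  rewrite big_nil; exact: is_derive_cst.
have -> : (fun u => \sum_(j <- i :: r) F j u) = F i + (fun u => \sum_(j <- r) F j u).
  by apply/funext => u; rewrite big_cons.
rewrite big_cons; exact: is_deriveD.
Qed.

Lemma is_derive_quot (f g : R -> R) (t df dg : R) :
  g t != 0 -> is_derive t 1 f df -> is_derive t 1 g dg ->
  is_derive t 1 (fun u => f u / g u) ((df * g t - f t * dg) / (g t) ^+ 2).
Proof.
move=> g0 hf hg.
have hV := is_deriveV g0 hg.
have := is_deriveM hf hV.
have -> : (f * (fun y => (g y)^-1)) = (fun u => f u / g u) by apply/funext.
move=> h; apply: (is_derive_eq h).
rewrite /GRing.scale /=; field; exact: g0.
Qed.

End Der.


Lemma zrange_uniq n : uniq (zrange n).
Proof.
rewrite /zrange map_inj_uniq ?iota_uniq // => i j; lia.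
Qed.

Lemma zrange_mem n (a : int) : a \in zrange n -> (`|a| <= n)%N.
Proof.
case/mapP => i; rewrite mem_iota add0n => /andP[_ hi] ->.
move: hi; rewrite -addnn; lia.
Qed.

Lemma boxseq_uniq n : uniq (boxseq n).
Proof.
apply: allpairs_uniq; rewrite ?zrange_uniq //.
by move=> [a b] [c d] _ _ /= ->.
Qed.

Lemma boxseq_mem n (v : site) : v \in boxseq n -> inbox n v.
Proof.
case/allpairsP => -[a b] /= [ha hb ->].
by rewrite /inbox /= (zrange_mem _ _ ha) (zrange_mem _ _ hb).
Qed.

Lemma sum_box_le (R : realType) (N M : nat) (P : pred site) (G : tsite N -> R) :
  (M < N)%N -> (forall x, 0 <= G x) ->
  \sum_(v <- boxseq M | P v) G (tproj N v) <= \sum_x G x.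
Proof.
move=> MN G0.
rewrite -big_filter -(big_map (tproj N) xpredT G).
have U : uniq [seq tproj N i | i <- boxseq M & P i].
  rewrite map_inj_in_uniq ?filter_uniq ?boxseq_uniq //.
  move=> u v; rewrite !mem_filter => /andP[_ /boxseq_mem hu] /andP[_ /boxseq_mem hv].
  exact: tproj_inj _ _ _ _ MN hu hv.
rewrite big_uniq //= [X in _ <= X](bigID (fun x => x \in [seq tproj N i | i <- boxseq M & P i])) /=.
rewrite lerDl; apply: sumr_ge0 => x _; exact: G0.
Qed.

Lemma Tc_ge0 (R : realType) (K : R) : 0 <= Tc K.
Proof.
rewrite /Tc; set S := [set _ | _].
have [hs|hs] := pselect (has_sup S); last by rewrite sup_out.
case: (hs) => [[T0 hT0] _].
apply: le_trans (sup_upper_bound hs hT0).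
by case: hT0 => /ltW.
Qed.

Lemma hpath_eq (R : realType) (K T h u : R) :
  hpath K T h u = (if hc K T < h then hc K T else h) + u * `|h - hc K T|.
Proof.
rewrite /hpath; case: ifP => H.
  by rewrite gtr0_norm // subr_gt0.
by rewrite ler0_norm ?opprB // subr_le0 leNgt H.
Qed.

Lemma hpath_norm (R : realType) (K T h t : R) : 0 <= t <= 1 ->
  `|hpath K T h t| <= `|h| + `|hc K T|.
Proof.
move=> /andP[t0 t1]; set c := hc K T.
have key (u v : R) : `|u + t * (v - u)| <= `|u| + `|v|.
  have -> : u + t * (v - u) = (1 - t) * u + t * v by ring.
  apply: le_trans (ler_normD _ _) _.
  rewrite !normrM (ger0_norm t0) ger0_norm ?subr_ge0 //.
  have h1 : (1 - t) * `|u| <= `|u| by rewrite ler_piMl // ?subr_ge0 // lerBlDr lerDl.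
  have h2 : t * `|v| <= `|v| by rewrite ler_piMl.
  lra.
rewrite /hpath -/c; case: ifP => _; first by apply: (le_trans (key c h)); rewrite addrC.
exact: key.
Qed.


Lemma main_bound (R : realType) (K T h : R) (N M : nat) (A : set config) (t : R) :
  0 < K -> 0 < T -> (M < N)%N -> increasing A -> local_in (inbox M) A ->
  0 <= t <= 1 ->
  derivable (fun s => mut K T h N s A) t 1 /\
  expR (- (beta_of K T * (3 * (4 + 2 * (`|h| + `|hc K T|))))) *
    (`|h - hc K T| / (K * T)) *
    (\sum_(v <- boxseq M | `[< Supp A v >]) mut K T h N t (A `&` Delta v A))
  <= derive1 (fun s => mut K T h N s A) t.
Proof.
move=> K0 T0 MN Ainc Aloc t01.
have N0 : (0 < N)%N by apply: leq_ltn_trans MN.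
set be := beta_of K T.
have be0 : 0 <= be by rewrite /be /beta_of invr_ge0 mulr_ge0 // ltW.
set a0 := (if hc K T < h then hc K T else h).
set b := `|h - hc K T|.
pose Ms (s : tconfig N) : R := \sum_x tspin s x.
pose cs (s : tconfig N) := be * (torusH 0 s + a0 * Ms s).
pose ls (s : tconfig N) := be * b * Ms s.
have eq1 u s : be * torusH (hpath K T h u) s = cs s + u * ls s.
  by rewrite torusH_lin // hpath_eq -/a0 -/b /cs /ls /Ms; ring.
pose Nf u := \sum_s (if Aev A s then expR (cs s + u * ls s) else 0).
pose Df u := \sum_s expR (cs s + u * ls s).
have mutE : (fun u => mut K T h N u A) = (fun u => Nf u / Df u).
  apply/funext => u; rewrite /mut /muN -/be; congr (_ / _); apply: eq_bigr => s _.
    by rewrite eq1.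
  by rewrite eq1.
pose w s := expR (cs s + t * ls s).
have w0 s : 0 < w s by apply: expR_gt0.
pose dN := \sum_s (if Aev A s then w s * ls s else 0).
pose dD := \sum_s w s * ls s.
have Df0 : Df t != 0.
  rewrite lt0r_neq0 // /Df (bigD1 [ffun=> false]) //=.
  apply: ltr_pwDl; first exact: expR_gt0.
  apply: sumr_ge0 => i _; apply: ltW; exact: expR_gt0.
have hder : is_derive t 1 (fun u => mut K T h N u A) ((dN * Df t - Nf t * dD) / (Df t) ^+ 2).
  rewrite mutE; apply: is_derive_quot => //.
    apply: is_derive_fsum => s; case: (Aev A s).
      exact: is_derive_expaff.
    exact: is_derive_cst.
  apply: is_derive_fsum => s; exact: is_derive_expaff.
split; first by case: hder.
rewrite derive1E (@derive_val _ _ _ _ _ _ _ hder).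
pose S := Sw R (tsite N) w.
set Z := S (fun _ => 1).
have eDf : Df t = Z by apply: eq_bigr => s _; rewrite mulr1.
have eNf : Nf t = S (fun s => (Aev A s)%:R).
  by apply: eq_bigr => s _; case: (Aev A s); rewrite ?mulr1 ?mulr0.
have edD : dD = be * b * S Ms.
  by rewrite /S /Sw mulr_sumr; apply: eq_bigr => s _; rewrite /ls; ring.
have edN : dN = be * b * S (fun s => (Aev A s)%:R * Ms s).
  rewrite /S /Sw mulr_sumr; apply: eq_bigr => s _; rewrite /ls.
  by case: (Aev A s); rewrite /=; ring.
pose Cov (x : tsite N) := S (fun s => (Aev A s)%:R * tsp R (tsite N) s x) * Z
    - S (fun s => (Aev A s)%:R) * S ((tsp R (tsite N))^~ x).
have eCov : S (fun s => (Aev A s)%:R * Ms s) * Z - S (fun s => (Aev A s)%:R) * S Ms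
    = \sum_x Cov x.
  rewrite /Cov sumrB -!mulr_suml -!mulr_sumr; congr (_ * _ - _ * _).
    rewrite /S /Sw (exchange_big_dep xpredT) //=; apply: eq_bigr => s _.
    by rewrite /Ms !mulr_sumr.
  rewrite /S /Sw (exchange_big_dep xpredT) //=; apply: eq_bigr => s _.
  by rewrite /Ms !mulr_sumr.
set Dst := 3 * (4 + 2 * (`|h| + `|hc K T|)).
set q := expR (- (be * Dst)).
have Dst0 : 0 <= Dst by rewrite /Dst mulr_ge0 // addr_ge0 // mulr_ge0 // addr_ge0.
have q0 : 0 < q by apply: expR_gt0.
have q1 : q <= 1 by rewrite expR_le1 oppr_le0 mulr_ge0.
have wlat a c : w a * w c <= w (cjoin a c) * w (cmeet a c).
  rewrite /w -!eq1 -!expRD ler_expR -!mulrDr.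
  by apply: ler_wpM2l => //; apply: torusH_latt.
have fe (x : tsite N) (s : tconfig N) : s x -> q * w s <= w (cupd s x false).
  move=> _; rewrite /w /q -!eq1 -expRD ler_expR.
  have H := @torusH_fe R N N0 (hpath K T h t) s (cupd s x false) x.
  have H1 : torusH (hpath K T h t) s - torusH (hpath K T h t) (cupd s x false)
      <= 3 * (4 + 2 * `|hpath K T h t|).
    by apply: H => y yx; rewrite ffunE (negbTE yx).
  have H2 := hpath_norm _ K T h t t01.
  have H3 : torusH (hpath K T h t) s - torusH (hpath K T h t) (cupd s x false) <= Dst.
    apply: le_trans H1 _; rewrite /Dst; lra.
  have := ler_wpM2l be0 H3; rewrite mulrBr; lra.
have Ainc' : forall s s' : tconfig N, le_cfg s s' -> Aev A s -> Aev A s'.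
  by move=> s s' le; apply: (@Aev_mono N A Ainc s s' le).
have piv (x : tsite N) := @pivot R (tsite N) w w0 wlat (Aev A) x q Ainc' q0 q1 (fe x).
have Cov0 x : 0 <= Cov x.
  apply: le_trans (piv x); apply: mulr_ge0; first apply: mulr_ge0.
  - exact: ltW.
  - by apply: (@Sw_ge0 R (tsite N) w w0) => s; rewrite ler0n.
  - by apply: (@Sw_ge0 R (tsite N) w w0) => s; rewrite ler01.
pose SE (v : site) := S (fun s => (Aev A s && ~~ Aev A (cupd s (tproj N v) false))%:R).
have Z0 : 0 < Z by rewrite -eDf lt0r Df0 /=; apply: sumr_ge0 => s _; apply: ltW; exact: expR_gt0.
have emut v : v \in boxseq M -> mut K T h N t (A `&` Delta v A) = SE v / Z.
  move=> /boxseq_mem hv; rewrite /mut /muN -/be; congr (_ / _).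
    apply: eq_bigr => s _; rewrite eq1 (@AD_ev N M A MN Ainc Aloc s v hv).
    by case: (_ && _); rewrite ?mulr1 ?mulr0.
  by apply: eq_bigr => s _; rewrite eq1 mulr1.
set X := \sum_(v <- boxseq M | `[< Supp A v >]) SE v.
have eS : \sum_(v <- boxseq M | `[< Supp A v >]) mut K T h N t (A `&` Delta v A) = X / Z.
  rewrite /X mulr_suml big_seq_cond [RHS]big_seq_cond; apply: eq_bigr => v /andP[hv _].
  exact: emut.
have X0 : 0 <= X.
  by apply: sumr_ge0 => v _; apply: (@Sw_ge0 R (tsite N) w w0) => s; rewrite ler0n.
have Cb : q * Z * X <= \sum_x Cov x.
  apply: le_trans (sum_box_le _ _ _ (fun v => `[< Supp A v >]) Cov MN Cov0).
  rewrite /X mulr_sumr; apply: ler_sum => v _.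
  have := piv (tproj N v); rewrite /Cov /SE; move=> H; apply: le_trans H.
  by rewrite mulrAC.
rewrite eS eDf eNf edN edD.
have num : be * b * S (fun s => (Aev A s)%:R * Ms s) * Z - S (fun s => (Aev A s)%:R) * (be * b * S Ms)
   = be * b * \sum_x Cov x by rewrite -eCov; ring.
rewrite num.
have b0 : 0 <= b by apply: normr_ge0.
have eb : b / (K * T) = b * be by [].
rewrite eb.
set C := \sum_x Cov x.
have Zn : Z != 0 by rewrite gt_eqF.
have -> : be * b * C / Z ^+ 2 = q * (b * be) * (X / Z) + be * b * (C - q * Z * X) / Z ^+ 2.
  by field.
rewrite lerDl; apply: mulr_ge0; last by rewrite invr_ge0 exprn_ge0 // ltW.
by apply: mulr_ge0; [apply: mulr_ge0|rewrite subr_ge0].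
Qed.

Theorem lemma8p3 (R : realType) (K T h : R) :
  0 < K -> Tc K < T ->
  0 < h -> h < 2 * hc K T -> h != hc K T ->
  exists C17 : R, 0 < C17 /\
    forall (k N : nat), (2 ^ k < N)%N ->
    forall A : set config, increasing A -> local_in (inbox (2 ^ k)) A ->
    forall t : R, 0 <= t <= 1 ->
      derivable (fun s => mut K T h N s A) t 1 /\
      C17 * (`|h - hc K T| / (K * T)) *
        (\sum_(v <- boxseq (2 ^ k) | `[< Supp A v >]) mut K T h N t (A `&` Delta v A))
      <= derive1 (fun s => mut K T h N s A) t.
Proof.
move=> K0 TcT _ _ _.
have T0 : 0 < T := le_lt_trans (Tc_ge0 _ K) TcT.
exists (expR (- (beta_of K T * (3 * (4 + 2 * (`|h| + `|hc K T|)))))).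
split; first exact: expR_gt0.
move=> k N kN A Ainc Aloc t t01.
exact: main_bound.
Qed.
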